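(* In the $q$-shuffle algebra $\mathbb V$ the following hold. (i) Each of the families $\{W_{-k}\}_{k\in\mathbb N}$, $\{W_{k+1}\}_{k\in\mathbb N}$, $\{G_{k+1}\}_{k\in\mathbb N}$, $\{\tilde G_{k+1}\}_{k\in\mathbb N}$ consists of mutually commuting elements (with respect to $\star$). (ii) An alternating word is of the form $W_{-k}$ ($k\in\mathbb N$) if and only if it commutes with $x$. (iii) An alternating word is of the form $W_{k+1}$ ($k\in\mathbb N$) if and only if it commutes with $y$. (iv) An alternating word is of the form $G_{k+1}$ ($k\in\mathbb N$) if and only if it commutes with $q\,y\star x-q^{-1}x\star y$. (v) An alternating word is of the form $\tilde G_{k+1}$ ($k\in\mathbb N$) if and only if it commutes with $q\,x\star y-q^{-1}y\star x$.
   Context: Let $\mathbb F$ be a field and let $q\in\mathbb F$ be nonzero and not a root of unity. Let $\mathbb V$ be the free associative $\mathbb F$-algebra on noncommuting $x,y$, with basis the words (including $1$). Juxtaposition denotes concatenation. Set $\langle x,x\rangle=\langle y,y\rangle=2$ and $\langle x,y\rangle=\langle y,x\rangle=-2$. The $q$-shuffle product $\star$ is the bilinear product determined as follows: - $1\star v=v\star 1=v$; - for nontrivial words $u=u_1\cdots u_r$ and $v=v_1\cdots v_s$, $$u\star v=u_1((u_2\cdots u_r)\star v)+v_1(u\star(v_2\cdots v_s))q^{\langle u_1,v_1\rangle+\cdots+\langle u_r,v_1\rangle}.$$ This makes $\mathbb V$ an associative algebra, the $q$-shuffle algebra. ''Commute'' means $a\star b=b\star a$. A word $v_1\cdots v_n$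 is alternating if $n\ge1$ and $v_{i-1}\ne v_i$ for $2\le i\le n$. For $k\in\mathbb N$: - $W_{-k}=xyx\cdots x$ is the alternating word of length $2k+1$ beginning and ending with $x$; - $W_{k+1}=yxy\cdots y$ is the alternating word of length $2k+1$ beginning and ending with $y$; - $G_{k+1}=yxyx\cdots yx$ is the word of length $2k+2$; - $\tilde G_{k+1}=xyxy\cdots xy$ is the word of length $2k+2$. Every alternating word is exactly one of these. *)

(* Defs.v *)
From HB Require Import structures.
From mathcomp Require Import all_boot all_order all_algebra.
Set Implicit Arguments. Unset Strict Implicit. Unset Printing Implicit Defensive.
Import Order.TTheory GRing.Theory Num.Theory.
Local Open Scope ring_scope.

Definition lx : bool := false.
Definition ly : bool := true.

Definition word := seq bool.

Definition bform (a b : bool) : int := if a == b then 2%:Z else - 2%:Z.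

Section QShuffle.
Variables (F : fieldType) (q : F).

(* Elements of the free algebra V are represented as finite formal linear
   combinations of words: a list of (coefficient, word) pairs.  Two
   representations denote the same element of V iff they have the same
   coefficient on every word (see [veq]). *)
Definition V := seq (F * word).

Definition coef (a : V) (w : word) : F := \sum_(p <- a | p.2 == w) p.1.

Definition veq (a b : V) : Prop := forall w : word, coef a w = coef b w.

Definition vword (w : word) : V := [:: (1, w)].
Definition vadd (a b : V) : V := a ++ b.
Definition vscale (c : F) (a : V) : V := [seq (c * p.1, p.2) | p <- a].

Definition vcons (c : F) (l : bool) (a : V) : V := [seq (c * p.1, l :: p.2) | p <- a].

Fixpoint wshuffle (u v : word) {struct u} : V :=
  match u with
  | [::] => vword v
  | u1 :: u' =>
      let fix g (v : word) : V :=
        match v with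
        | [::] => vword u
        | v1 :: v' =>
            vcons 1 u1 (wshuffle u' v) ++
            vcons (q ^ (\sum_(a <- u) bform a v1)) v1 (g v')
        end
      in g v
  end.

Definition vstar (a b : V) : V :=
  flatten [seq vscale (p.1 * r.1) (wshuffle p.2 r.2) | p <- a, r <- b].

Definition qcommute (a b : V) : Prop := veq (vstar a b) (vstar b a).

End QShuffle.

Definition altw (l : bool) (n : nat) : word := mkseq (fun i => l (+) odd i) n.

(* W_{-k} = xyx...x (length 2k+1) *)
Definition Wneg (k : nat) : word := altw lx (2 * k + 1).
(* W_{k+1} = yxy...y (length 2k+1) *)
Definition Wpos (k : nat) : word := altw ly (2 * k + 1).
(* G_{k+1} = yx...yx (length 2k+2) *)
Definition Gw (k : nat) : word := altw ly (2 * k + 2).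
(* tilde G_{k+1} = xy...xy (length 2k+2) *)
Definition Gtw (k : nat) : word := altw lx (2 * k + 2).

Definition alternating (w : word) : Prop :=
  (1 <= size w)%N /\
  forall i : nat, (1 <= i < size w)%N -> nth lx w i.-1 != nth lx w i.

(* Main.v *)
Require Import Defs.
From mathcomp Require Import all_boot all_order all_algebra.
From mathcomp Require Import ring.
Import GRing.Theory.
Local Open Scope ring_scope.
Set Implicit Arguments. Unset Strict Implicit.


Fixpoint cs {F : fieldType} (q : F) (u v w : word) : F :=
  match w with
  | [::] => if (u == [::]) && (v == [::]) then 1 else 0
  | a :: w' =>
     (if u is b :: u' then (if b == a then cs q u' v w' else 0) else 0) +
     (if v is b :: v' then (if b == a then q ^ (\sum_(c <- u) bform c b) * cs q u v' w' else 0) else 0)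
  end.

Lemma cs0 (F : fieldType) (q : F) v w : cs q [::] v w = if v == w then 1 else 0.
Proof.
elim: w v => [|a w IH] [|b v] //=; rewrite ?add0r //.
rewrite big_nil expr0z mul1r IH eqseq_cons.
by case: (b == a).
Qed.

Lemma csr0 (F : fieldType) (q : F) u w : cs q u [::] w = if u == w then 1 else 0.
Proof.
elim: w u => [|a w IH] [|b u] //=; rewrite ?addr0 //.
rewrite IH eqseq_cons.
by case: (b == a).
Qed.

Lemma coef_cat (F : fieldType) (a b : V F) w : coef (a ++ b) w = coef a w + coef b w.
Proof. by rewrite /coef big_cat. Qed.

Lemma coef_vword (F : fieldType) v w : coef (vword F v) w = if v == w then 1 else 0.
Proof. by rewrite /coef /vword big_cons big_nil /= addr0. Qed.

Lemma coef_nil (F : fieldType) w : coef ([::] : V F) w = 0.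
Proof. by rewrite /coef big_nil. Qed.

Lemma coef_vcons (F : fieldType) (c : F) l (a : V F) w :
  coef (vcons c l a) w = if w is b :: w' then (if l == b then c * coef a w' else 0) else 0.
Proof.
rewrite /coef /vcons big_map.
case: w => [|b w].
  by rewrite big1.
case: (l =P b) => [<-|nlb].
  rewrite big_distrr /=; apply: eq_bigl => p /=; by rewrite eqseq_cons eqxx.
rewrite big1 // => p /=; rewrite eqseq_cons => /andP [/eqP] //.
Qed.

Lemma coef_vscale (F : fieldType) (c : F) (a : V F) w :
  coef (vscale c a) w = c * coef a w.
Proof. by rewrite /coef /vscale big_map big_distrr. Qed.

Lemma coef_flatten (F : fieldType) (L : seq (V F)) w :
  coef (flatten L) w = \sum_(l <- L) coef l w.
Proof.
elim: L => [|l L IH] /=; first by rewrite big_nil coef_nil.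
by rewrite coef_cat IH big_cons.
Qed.

Lemma wshuffle_cons (F : fieldType) (q : F) u1 u' v1 v' :
  wshuffle q (u1 :: u') (v1 :: v') =
  vcons 1 u1 (wshuffle q u' (v1 :: v')) ++
  vcons (q ^ (\sum_(a <- u1 :: u') bform a v1)) v1 (wshuffle q (u1 :: u') v').
Proof. by []. Qed.

Lemma wshuffle_nil (F : fieldType) (q : F) v : wshuffle q [::] v = vword F v.
Proof. by []. Qed.
Lemma wshuffle_niln (F : fieldType) (q : F) u1 u : wshuffle q (u1 :: u) [::] = vword F (u1 :: u).
Proof. by []. Qed.

Lemma coef_wshuffle (F : fieldType) (q : F) u v w :
  coef (wshuffle q u v) w = cs q u v w.
Proof.
elim: w u v => [|a w IH] [|u1 u] [|v1 v].
- by rewrite coef_vword.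
- by rewrite /= coef_vword.
- by rewrite /= coef_vword.
- by rewrite wshuffle_cons coef_cat !coef_vcons /= addr0.
- by rewrite wshuffle_nil coef_vword cs0.
- by rewrite wshuffle_nil coef_vword cs0.
- by rewrite wshuffle_niln coef_vword csr0.
- by rewrite wshuffle_cons coef_cat !coef_vcons !IH mul1r.
Qed.

Lemma coef_vstar (F : fieldType) (q : F) (a b : V F) w :
  coef (vstar q a b) w = \sum_(p <- a) \sum_(r <- b) p.1 * r.1 * cs q p.2 r.2 w.
Proof.
rewrite /vstar coef_flatten.
elim: a => [|p a IH] /=; first by rewrite !big_nil.
rewrite big_cat big_cons IH; congr (_ + _).
rewrite big_map; apply: eq_bigr => r _.
by rewrite coef_vscale coef_wshuffle.
Qed.


Definition Aw (m : nat) : word := altw (~~ odd m) m.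
Definition Bw (m : nat) : word := altw (odd m) m.

Lemma altw_S l n : altw l n.+1 = l :: altw (~~ l) n.
Proof.
rewrite /altw /mkseq /= addbF; congr (_ :: _).
rewrite -[1%N]addn0 iotaDl -map_comp; apply: eq_map => i /=.
by rewrite add0n addbN negb_add.
Qed.

Lemma Aw_S m : Aw m.+1 = odd m :: Aw m.
Proof. by rewrite /Aw altw_S /= !negbK. Qed.

Lemma Bw_S m : Bw m.+1 = ~~ odd m :: Bw m.
Proof. by rewrite /Bw altw_S /= negbK. Qed.

Lemma wtA m a : \sum_(c <- Aw m) bform c a = if odd m then bform false a else 0.
Proof.
elim: m => [|m IH]; first by rewrite big_nil.
rewrite Aw_S big_cons IH /=; clear IH.
by case: (odd m); case: a; rewrite /bform /= ?addr0 ?add0r.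
Qed.

Definition qw (F : fieldType) (q : F) (a : bool) : F := if a then (q ^+ 2)^-1 else q ^+ 2.

Lemma qzA (F : fieldType) (q : F) m a :
  q ^ (\sum_(c <- Aw m) bform c a) = if odd m then qw q a else 1.
Proof.
rewrite wtA; case: (odd m); last by rewrite expr0z.
by case: a.
Qed.


Definition CC (F : fieldType) (q : F) m n w := cs q (Aw m) (Aw n) w.

Lemma CC_nil (F : fieldType) (q : F) m n :
  CC q m n [::] = if (m == 0%N) && (n == 0%N) then 1 else 0.
Proof. by case: m => [|m]; case: n => [|n]; rewrite /CC ?Aw_S. Qed.

Lemma CC_rec (F : fieldType) (q : F) m n a w :
  CC q m n (a :: w) =
  (if m is m'.+1 then (if odd m' == a then CC q m' n w else 0) else 0) +
  (if n is n'.+1 then (if odd n' == a then (if odd m then qw q a else 1) * CC q m n' w else 0) else 0).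
Proof.
rewrite /CC; case: m => [|m]; case: n => [|n]; rewrite ?Aw_S /=; try done.
- by rewrite qzA.
- case: (odd n =P a) => [<-|//].
  by rewrite -[odd m :: Aw m]Aw_S qzA.
Qed.

Lemma CC0n (F : fieldType) (q : F) n w : CC q 0 n w = CC q n 0 w.
Proof. by rewrite /CC cs0 csr0. Qed.

Lemma lin_from (F : fieldType) (L R a b k : F) : L - R = k * (a - b) -> a = b -> L = R.
Proof. by move=> E H; apply/eqP; rewrite -subr_eq0 E H subrr mulr0. Qed.

Lemma lin_from2 (F : fieldType) (L R a b c d k l : F) :
  L - R = k * (a - b) + l * (c - d) -> a = b -> c = d -> L = R.
Proof. by move=> E H1 H2; apply/eqP; rewrite -subr_eq0 E H1 H2 !subrr !mulr0 addr0. Qed.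

Lemma mainA (F : fieldType) (q : F) (hq0 : q != 0) w :
  (forall i j, CC q i.*2.+1 j.*2.+1 w = CC q j.*2.+1 i.*2.+1 w) /\
  (forall i j, CC q i.*2 j.*2 w = CC q j.*2 i.*2 w) /\
  (forall i j, q * CC q i.*2.+1 j.*2 w - q^-1 * CC q j.*2 i.*2.+1 w =
               q * CC q j.*2.+1 i.*2 w - q^-1 * CC q i.*2 j.*2.+1 w) /\
  (forall i j, CC q i.*2.+1 j.*2.+2 w - CC q j.*2.+2 i.*2.+1 w =
               CC q j.*2.+1 i.*2.+2 w - CC q i.*2.+2 j.*2.+1 w).
Proof.
elim: w => [|a w [SO [SE [M K]]]].
  split; [|split; [|split]] => i j; rewrite !CC_nil /= ?andbF //.
  by case: i => [|i]; case: j => [|j].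
split; [|split; [|split]].
- move=> i j; rewrite !CC_rec /= !odd_double /=.
  case: a => /=; first by rewrite !addr0.
  apply: (lin_from (k := -q) _ (M j i)); by field.
- case=> [|i] [|j]; rewrite ?CC0n // !doubleS !CC_rec /= ?odd_double /=.
  case: a => /=; first by apply: (lin_from (k := 1) _ (K i j)); ring.
  by rewrite !addr0.
- move=> i j; case: i => [|i]; case: j => [|j]; rewrite ?doubleS !CC_rec /= ?odd_double /=; case: a => /=.
  + by [].
  + by [].
  + by rewrite (SO 0 j); field.
  + by have H := SE 0 j.+1; rewrite doubleS in H; rewrite H; ring.
  + by rewrite (SO 0 i); field.
  + by have H := SE i.+1 0; rewrite doubleS in H; rewrite H; ring.
  + have H1 := SO i.+1 j; have H2 := SO j.+1 i; rewrite doubleS in H1; rewrite doubleS in H2.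
    by rewrite H1 H2; field.
  + by have H := SE i.+1 j.+1; rewrite !doubleS in H; rewrite H; ring.
- move=> i j; rewrite !CC_rec /= !odd_double /=; case: a => /=.
  + by rewrite (SO i j); field.
  + have H1 := SE i j.+1; have H2 := SE j i.+1; rewrite doubleS in H1; rewrite doubleS in H2.
    by rewrite H1 H2; ring.
Qed.


Lemma cs_cons (F : fieldType) (q : F) u v a w : cs q u v (a :: w) =
     (if u is b :: u' then (if b == a then cs q u' v w else 0) else 0) +
     (if v is b :: v' then (if b == a then q ^ (\sum_(c <- u) bform c b) * cs q u v' w else 0) else 0).
Proof. by []. Qed.

Arguments cs : simpl never.

Lemma qbform (F : fieldType) (q : F) a b : q ^ (bform a b) = if a == b then q ^+ 2 else (q ^+ 2)^-1.
Proof. by case: a; case: b. Qed.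

Lemma qsum_cons (F : fieldType) (q : F) (hq0 : q != 0) a v b :
  q ^ (\sum_(c <- a :: v) bform c b) = q ^ (bform a b) * q ^ (\sum_(c <- v) bform c b).
Proof. by rewrite big_cons expfzDr. Qed.

Lemma qsum_nil (F : fieldType) (q : F) b : q ^ (\sum_(c <- [::]) bform c b) = 1.
Proof. by rewrite big_nil expr0z. Qed.

Lemma L1a (F : fieldType) (q : F) a v : head (~~ a) v != a -> cs q [:: a] v (a :: v) = 1.
Proof.
move=> h; rewrite cs_cons eqxx cs0 eqxx.
case: v h => [|b v] /= h; first by rewrite addr0.
by rewrite (negbTE h) addr0.
Qed.

Lemma L1b (F : fieldType) (q : F) a v : head (~~ a) v != a ->
  cs q v [:: a] (a :: v) = q ^ (\sum_(c <- v) bform c a).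
Proof.
move=> h; rewrite cs_cons eqxx csr0 eqxx mulr1.
case: v h => [|b v] /= h; first by rewrite add0r.
by rewrite (negbTE h) add0r.
Qed.

Definition ccomm (F : fieldType) (q : F) u v := forall w, cs q u v w = cs q v u w.

Lemma q2facts (F : fieldType) (q : F) (hq0 : q != 0) (hq : forall n : nat, (0 < n)%N -> q ^+ n != 1) :
  [/\ q ^+ 2 != 1, 1 + q ^+ 2 != 0 & (q ^+ 2)^-1 != q ^+ 2].
Proof.
have h2 := hq 2%N isT; have h4 := hq 4%N isT.
split => //.
- apply/negP => /eqP E; move/negP: h4; apply; apply/eqP.
  have -> : q ^+ 4 = (q ^+ 2) * (q ^+ 2) by rewrite -exprD.
  have -> : q ^+ 2 = -1 by apply/eqP; rewrite -subr_eq0 opprK addrC E.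
  by rewrite mulrNN mulr1.
- apply/negP => /eqP E; move/negP: h4; apply; apply/eqP.
  have -> : q ^+ 4 = (q ^+ 2) * (q ^+ 2) by rewrite -exprD.
  by rewrite -{1}E mulVf // expf_neq0.
Qed.


Lemma contra_q (F : fieldType) (q : F) (hq0 : q != 0) (hq : forall n : nat, (0 < n)%N -> q ^+ n != 1)
  (L R k : F) : L = R -> (q ^+ 2 - 1) * (1 + q ^+ 2) = k * (L - R) -> False.
Proof.
move=> E1 E2; have [h2 h1 _] := q2facts hq0 hq.
have : (q ^+ 2 - 1) * (1 + q ^+ 2) != 0 by rewrite mulf_neq0 // subr_eq0.
by rewrite E2 E1 subrr mulr0 eqxx.
Qed.

Lemma N1 (F : fieldType) (q : F) (hq0 : q != 0) (hq : forall n : nat, (0 < n)%N -> q ^+ n != 1) b :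
  head true b != false -> q ^ (\sum_(c <- b) bform c false) = 1 ->
  ~ ccomm q [:: true, false & b] [:: false].
Proof.
move=> hb wb /(_ [:: true, false, false & b]).
rewrite 2!cs_cons /= (L1b _ hb) wb csr0 eqxx qsum_cons // wb qbform /=.
rewrite cs_cons /= cs_cons /= cs0 eqxx (L1a _ hb) !qsum_cons // !qsum_nil !qbform /=.
move/(contra_q hq0 hq (k := q ^+ 2)); apply; by field.
Qed.

Lemma N2 (F : fieldType) (q : F) (hq0 : q != 0) (hq : forall n : nat, (0 < n)%N -> q ^+ n != 1) u :
  head true u != false -> q ^ (\sum_(c <- u) bform c false) = (q ^+ 2)^-1 ->
  ~ ccomm q u [:: false].
Proof.
move=> hb wb /(_ (false :: u)).
rewrite (L1b _ hb) (L1a _ hb) wb.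
move/(contra_q hq0 hq (k := - (q ^+ 2 * (1 + q ^+ 2)))); apply; by field.
Qed.

Lemma N3 (F : fieldType) (q : F) (hq0 : q != 0) (hq : forall n : nat, (0 < n)%N -> q ^+ n != 1) b :
  head true b != false -> q ^ (\sum_(c <- b) bform c false) = (q ^+ 2)^-1 ->
  ~ ccomm q (false :: b) [:: false].
Proof.
move=> hb wb /(_ [:: false, false & b]).
rewrite cs_cons /= (L1b _ hb) csr0 eqxx.
rewrite cs_cons /= cs0 eqxx (L1a _ hb) !qsum_cons // wb !qsum_nil !qbform /=.
move/(contra_q hq0 hq (k := - q ^+ 2)); apply; by field.
Qed.

Lemma N4 (F : fieldType) (q : F) (hq0 : q != 0) (hq : forall n : nat, (0 < n)%N -> q ^+ n != 1) b :
  head true b != false -> q ^ (\sum_(c <- b) bform c false) = 1 -> q ^ (\sum_(c <- b) bform c true) = 1 ->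
  ~ ccomm q (false :: b) [:: true; false].
Proof.
move=> hb wb wb' /(_ [:: true, false, false & b]).
rewrite cs_cons /= cs_cons /= (L1b _ hb) csr0 eqxx !qsum_cons // wb wb' !qbform /=.
rewrite cs_cons /= cs_cons /= cs0 eqxx (L1a _ hb) !qsum_cons // !qsum_nil !qbform /=.
move/(contra_q hq0 hq (k := - q ^+ 2)); apply; by field.
Qed.

Lemma N6 (F : fieldType) (q : F) (hq0 : q != 0) (hq : forall n : nat, (0 < n)%N -> q ^+ n != 1) b :
  head true b != false -> q ^ (\sum_(c <- b) bform c false) = (q ^+ 2)^-1 ->
  q ^ (\sum_(c <- b) bform c true) = q ^+ 2 ->
  ~ ccomm q (false :: b) [:: true; false].
Proof.
move=> hb wb wb' /(_ [:: true, false, false & b]).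
rewrite cs_cons /= cs_cons /= (L1b _ hb) csr0 eqxx !qsum_cons // wb wb' !qbform /=.
rewrite cs_cons /= cs_cons /= cs0 eqxx (L1a _ hb) !qsum_cons // !qsum_nil !qbform /=.
move/(contra_q hq0 hq (k := - q ^+ 2)); apply; by field.
Qed.

Lemma H1 (F : fieldType) (q : F) b r : head false b != true ->
  cs q b [:: true; false] (true :: r) = q ^ (\sum_(c <- b) bform c true) * cs q b [:: false] r.
Proof.
rewrite cs_cons /=; case: b => [|c b] /= h; first by rewrite add0r.
by rewrite (negbTE h) add0r.
Qed.

Lemma H2 (F : fieldType) (q : F) b r : head false b != true ->
  cs q [:: true; false] b (true :: r) = cs q [:: false] b r.
Proof.
rewrite cs_cons /=; case: b => [|c b] /= h; first by rewrite addr0.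
by rewrite (negbTE h) addr0.
Qed.

Lemma RL (F : fieldType) (q : F) (hq0 : q != 0) k :
  cs q (Bw k.*2) [:: false] (rcons (Bw k.*2) false) = 1 /\
  cs q [:: false] (Bw k.*2) (rcons (Bw k.*2) false) = 1.
Proof.
elim: k => [|k [IH1 IH2]].
  by rewrite /= cs0 csr0.
rewrite doubleS !Bw_S /= odd_double /=.
split.
- rewrite cs_cons /= csr0 /= mulr0 addr0 cs_cons /= addr0 //.
- rewrite cs_cons /= cs0 /= add0r cs_cons /= add0r IH2 !qsum_cons // qsum_nil !qbform /=.
  by rewrite qsum_nil; field.
Qed.

Lemma N5 (F : fieldType) (q : F) (hq0 : q != 0) (hq : forall n : nat, (0 < n)%N -> q ^+ n != 1) b :
  head false b != true -> q ^ (\sum_(c <- b) bform c true) = 1 ->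
  cs q b [:: false] (rcons b false) = 1 -> cs q [:: false] b (rcons b false) = 1 ->
  ~ ccomm q (true :: b) [:: true; false].
Proof.
move=> hb wb R1 R2 /(_ [:: true, true & rcons b false]).
rewrite cs_cons /= (H1 _ _ hb) wb cs_cons /= R1.
rewrite cs_cons /= (H2 _ _ hb) cs_cons /= R2 !qsum_cons // wb !qsum_nil !qbform /=.
move/(contra_q hq0 hq (k := q ^+ 2)); apply; by field.
Qed.


Lemma cs_nil (F : fieldType) (q : F) u v : cs q u v [::] = if (u == [::]) && (v == [::]) then 1 else 0.
Proof. by []. Qed.

Lemma bformN a b : bform (~~ a) (~~ b) = bform a b.
Proof. by case: a; case: b. Qed.

Lemma cs_swap (F : fieldType) (q : F) u v w :
  cs q (map negb u) (map negb v) (map negb w) = cs q u v w.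
Proof.
elim: w u v => [|a w IH] u v.
  by rewrite /= !cs_nil; case: u; case: v.
rewrite [map negb (a :: w)]/= !cs_cons.
have E : forall b c : bool, (~~ b == ~~ c) = (b == c) by case; case.
congr (_ + _).
  by case: u => [|b u] //=; rewrite E IH.
case: v => [|c v] //=; rewrite E; case: (c == a) => //.
rewrite big_map; under eq_bigr do rewrite bformN.
by rewrite IH.
Qed.

Lemma ccomm_swap (F : fieldType) (q : F) u v :
  ccomm q (map negb u) (map negb v) <-> ccomm q u v.
Proof.
split=> H w.
  by rewrite -!(cs_swap q _ _ w) H.
by rewrite -(mapK negbK w) !cs_swap H.
Qed.

Lemma comm_word (F : fieldType) (q : F) u v :
  qcommute q (vword F u) (vword F v) <-> ccomm q u v.
Proof.
rewrite /qcommute /veq /ccomm.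
by split=> H w; have := H w; rewrite !coef_vstar /vword !big_cons !big_nil /= !mul1r !addr0.
Qed.

Lemma altw_negb l n : map negb (altw l n) = altw (~~ l) n.
Proof. by rewrite /altw /mkseq -map_comp; apply: eq_map => i /=; rewrite addNb. Qed.

Lemma Bw_negA m : Bw m = map negb (Aw m).
Proof. by rewrite /Bw /Aw altw_negb negbK. Qed.

Lemma Aw_negB m : Aw m = map negb (Bw m).
Proof. by rewrite Bw_negA mapK //; exact: negbK. Qed.

Lemma Wneg_A k : Wneg k = Aw k.*2.+1.
Proof. by rewrite /Wneg /Aw /= odd_double -mul2n addn1. Qed.

Lemma Gw_A k : Gw k = Aw k.*2.+2.
Proof. by rewrite /Gw /Aw /= odd_double -mul2n addn2. Qed.

Lemma Wpos_B k : Wpos k = map negb (Wneg k).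
Proof. by rewrite /Wpos /Wneg altw_negb. Qed.

Lemma Gtw_B k : Gtw k = map negb (Gw k).
Proof. by rewrite /Gtw /Gw altw_negb. Qed.

Lemma size_altw l n : size (altw l n) = n.
Proof. by rewrite /altw size_mkseq. Qed.

Lemma alt_AB w : alternating w -> (0 < size w)%N /\ (w = Aw (size w) \/ w = Bw (size w)).
Proof.
case=> h1 h2; split => //.
have Ew : w = altw (nth lx w 0) (size w).
  apply: (@eq_from_nth _ lx); first by rewrite size_altw.
  move=> i; rewrite /altw; elim: i => [|i IH] hi.
    by rewrite nth_mkseq //= addbF.
  rewrite nth_mkseq // /=.
  have hi' : (i < size w)%N by apply: ltnW.
  have := h2 i.+1; rewrite hi /= => /(_ isT).
  rewrite (IH hi') nth_mkseq //.
  by case: (nth lx w i.+1); case: (nth lx w 0); case: (odd i).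
rewrite /Aw /Bw; set l := nth lx w 0 in Ew *.
by case: l Ew; case: (odd (size w)) => Ew; auto.
Qed.

Lemma wtB m a : \sum_(c <- Bw m) bform c a = if odd m then bform true a else 0.
Proof.
elim: m => [|m IH]; first by rewrite big_nil.
rewrite Bw_S big_cons IH /=; clear IH.
by case: (odd m); case: a; rewrite /bform /= ?addr0 ?add0r.
Qed.


Lemma coefZ (F : fieldType) (q : F) (hq0 : q != 0) u w :
  let X := vword F [:: lx] in let Y := vword F [:: ly] in
  let Z := vadd (vscale q (vstar q Y X)) (vscale (- q^-1) (vstar q X Y)) in
  coef (vstar q (vword F u) Z) w = (q - q^-1 / q ^+ 2) * cs q u [:: ly; lx] w /\
  coef (vstar q Z (vword F u)) w = (q - q^-1 / q ^+ 2) * cs q [:: ly; lx] u w.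
Proof.
move=> X Y Z.
rewrite !coef_vstar /Z /X /Y /vword /vadd /vscale /vstar /=.
rewrite !big_cons !big_nil /= !addr0 !qbform /=.
by split; field.
Qed.

Lemma coefZ' (F : fieldType) (q : F) (hq0 : q != 0) u w :
  let X := vword F [:: lx] in let Y := vword F [:: ly] in
  let Z := vadd (vscale q (vstar q X Y)) (vscale (- q^-1) (vstar q Y X)) in
  coef (vstar q (vword F u) Z) w = (q - q^-1 / q ^+ 2) * cs q u [:: lx; ly] w /\
  coef (vstar q Z (vword F u)) w = (q - q^-1 / q ^+ 2) * cs q [:: lx; ly] u w.
Proof.
move=> X Y Z.
rewrite !coef_vstar /Z /X /Y /vword /vadd /vscale /vstar /=.
rewrite !big_cons !big_nil /= !addr0 !qbform /=.
by split; field.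
Qed.

Lemma cfac_neq0 (F : fieldType) (q : F) (hq0 : q != 0) (hq : forall n : nat, (0 < n)%N -> q ^+ n != 1) :
  q - q^-1 / q ^+ 2 != 0.
Proof.
have [h2 h1 h3] := q2facts hq0 hq.
have -> : q - q^-1 / q ^+ 2 = q^-1 * (q ^+ 2 - (q ^+ 2)^-1) by field.
rewrite mulf_neq0 ?invr_eq0 // subr_eq0 eq_sym //.
Qed.

Lemma commZ (F : fieldType) (q : F) (hq0 : q != 0) (hq : forall n : nat, (0 < n)%N -> q ^+ n != 1) u :
  let X := vword F [:: lx] in let Y := vword F [:: ly] in
  qcommute q (vword F u) (vadd (vscale q (vstar q Y X)) (vscale (- q^-1) (vstar q X Y)))
  <-> ccomm q u [:: ly; lx].
Proof.
move=> X Y; rewrite /qcommute /veq /ccomm.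
split=> H w; have := H w; have [-> ->] := coefZ hq0 u w.
  by move/(mulfI (cfac_neq0 hq0 hq)).
by move=> ->.
Qed.

Lemma commZ' (F : fieldType) (q : F) (hq0 : q != 0) (hq : forall n : nat, (0 < n)%N -> q ^+ n != 1) u :
  let X := vword F [:: lx] in let Y := vword F [:: ly] in
  qcommute q (vword F u) (vadd (vscale q (vstar q X Y)) (vscale (- q^-1) (vstar q Y X)))
  <-> ccomm q u [:: lx; ly].
Proof.
move=> X Y; rewrite /qcommute /veq /ccomm.
split=> H w; have := H w; have [-> ->] := coefZ' hq0 u w.
  by move/(mulfI (cfac_neq0 hq0 hq)).
by move=> ->.
Qed.


Lemma qzB (F : fieldType) (q : F) m a :
  q ^ (\sum_(c <- Bw m) bform c a) = if odd m then (if a then q ^+ 2 else (q ^+ 2)^-1) else 1.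
Proof. by rewrite wtB; case: (odd m); [case: a | rewrite expr0z]. Qed.

Lemma parity n : (exists j, n = j.*2.+1) \/ (exists j, n = j.*2).
Proof.
have := odd_double_half n; case: (odd n) => /= E.
  by left; exists n./2; rewrite -{1}E.
by right; exists n./2; rewrite -{1}E.
Qed.

Lemma Aw_odd j : Aw j.*2.+1 = false :: Aw j.*2.
Proof. by rewrite Aw_S odd_double. Qed.
Lemma Aw_even j : Aw j.*2.+2 = true :: false :: Aw j.*2.
Proof. by rewrite Aw_S Aw_S /= odd_double. Qed.
Lemma Bw_odd j : Bw j.*2.+1 = true :: Bw j.*2.
Proof. by rewrite Bw_S odd_double. Qed.
Lemma Bw_even j : Bw j.*2.+2 = false :: Bw j.*2.+1.
Proof. by rewrite Bw_S /= odd_double. Qed.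

Lemma headAe j : head true (Aw j.*2) = true.
Proof. by case: j => [|j] //; rewrite doubleS Aw_even. Qed.
Lemma headBe j : head false (Bw j.*2) = false.
Proof. by case: j => [|j] //; rewrite doubleS Bw_even Bw_odd. Qed.

Lemma coreX (F : fieldType) (q : F) (hq0 : q != 0) (hq : forall n : nat, (0 < n)%N -> q ^+ n != 1) u n :
  (0 < n)%N -> (u = Aw n \/ u = Bw n) ->
  ((exists k, u = Aw k.*2.+1) <-> ccomm q u [:: false]).
Proof.
move=> n0 hu; split.
  case=> k -> w; have := (proj1 (mainA hq0 w)) k 0.
  by rewrite /CC.
move=> H; case: hu => Eu; subst u.
  case: (parity n) => [[j ->]|[j Ej]]; first by exists j.
  subst n; case: j n0 H => [|j] // _; rewrite doubleS Aw_even => H.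
  exfalso; apply: (N1 hq0 hq _ _ H); first by rewrite headAe.
  by rewrite qzA odd_double.
exfalso; case: (parity n) => [[j Ej]|[j Ej]]; subst n.
  apply: (N2 hq0 hq _ _ H); first by rewrite Bw_odd.
  by rewrite qzB /= odd_double.
case: j n0 H => [|j] // _; rewrite doubleS Bw_even => H.
apply: (N3 hq0 hq _ _ H); first by rewrite Bw_odd.
by rewrite qzB /= odd_double.
Qed.

Lemma coreG (F : fieldType) (q : F) (hq0 : q != 0) (hq : forall n : nat, (0 < n)%N -> q ^+ n != 1) u n :
  (0 < n)%N -> (u = Aw n \/ u = Bw n) ->
  ((exists k, u = Aw k.*2.+2) <-> ccomm q u [:: true; false]).
Proof.
move=> n0 hu; split.
  case=> k -> w; have := (proj1 (proj2 (mainA hq0 w))) k.+1 1.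
  by rewrite /CC doubleS.
move=> H; case: hu => Eu; subst u.
  case: (parity n) => [[j Ej]|[j Ej]]; subst n.
    exfalso; move: H; rewrite Aw_odd => H.
    apply: (N4 hq0 hq _ _ _ H); first by rewrite headAe.
      by rewrite qzA odd_double.
    by rewrite qzA odd_double.
  case: j n0 H => [|j] // _ H; exists j; by rewrite doubleS.
exfalso; case: (parity n) => [[j Ej]|[j Ej]]; subst n.
  move: H; rewrite Bw_odd => H.
  have [R1 R2] := RL hq0 j.
  apply: (N5 hq0 hq _ _ R1 R2 H); first by rewrite headBe.
  by rewrite qzB odd_double.
case: j n0 H => [|j] // _; rewrite doubleS Bw_even => H.
apply: (N6 hq0 hq _ _ _ H); first by rewrite Bw_odd.
  by rewrite qzB /= odd_double.
by rewrite qzB /= odd_double.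
Qed.


Lemma negb_map_eq (u v : word) : (u = map negb v) <-> (map negb u = v).
Proof.
split=> [->|<-]; by rewrite mapK //; exact: negbK.
Qed.

Lemma alt_swap w : alternating w ->
  (0 < size w)%N /\ (map negb w = Aw (size w) \/ map negb w = Bw (size w)).
Proof.
move=> /alt_AB [h]; set n := size w => -[E|E]; split => //; rewrite E.
  by right; rewrite Bw_negA.
by left; rewrite Aw_negB.
Qed.

Unset Implicit Arguments. Set Strict Implicit.

Theorem lemma5p12 (F : fieldType) (q : F)
  (hq0 : q != 0) (hq : forall n : nat, (0 < n)%N -> q ^+ n != 1) :
  let X := vword F [:: lx] in
  let Y := vword F [:: ly] in
  let star := vstar q in
  let comm := qcommute q in
  (* (i) *)
  ((forall k l : nat, comm (vword F (Wneg k)) (vword F (Wneg l))) /\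
   (forall k l : nat, comm (vword F (Wpos k)) (vword F (Wpos l))) /\
   (forall k l : nat, comm (vword F (Gw k)) (vword F (Gw l))) /\
   (forall k l : nat, comm (vword F (Gtw k)) (vword F (Gtw l)))) /\
  (* (ii) *)
  (forall w : word, alternating w ->
     ((exists k : nat, w = Wneg k) <-> comm (vword F w) X)) /\
  (* (iii) *)
  (forall w : word, alternating w ->
     ((exists k : nat, w = Wpos k) <-> comm (vword F w) Y)) /\
  (* (iv) *)
  (forall w : word, alternating w ->
     ((exists k : nat, w = Gw k) <->
      comm (vword F w) (vadd (vscale q (star Y X)) (vscale (- q^-1) (star X Y))))) /\
  (* (v) *)
  (forall w : word, alternating w ->
     ((exists k : nat, w = Gtw k) <->
      comm (vword F w) (vadd (vscale q (star X Y)) (vscale (- q^-1) (star Y X))))).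
Proof.
move=> X Y star comm.
have iW : forall k l, ccomm q (Wneg k) (Wneg l).
  by move=> k l w; rewrite !Wneg_A; have := (proj1 (mainA hq0 w)) k l.
have iG : forall k l, ccomm q (Gw k) (Gw l).
  move=> k l w; rewrite !Gw_A; have := (proj1 (proj2 (mainA hq0 w))) k.+1 l.+1.
  by rewrite /CC !doubleS.
split; [split; [|split; [|split]]|split; [|split; [|split]]].
- by move=> k l; apply/comm_word.
- by move=> k l; apply/comm_word; rewrite !Wpos_B; apply/ccomm_swap.
- by move=> k l; apply/comm_word.
- by move=> k l; apply/comm_word; rewrite !Gtw_B; apply/ccomm_swap.
- move=> w /alt_AB [n0 hw].
  apply: (iff_trans _ (iff_trans (coreX hq0 hq n0 hw) (iff_sym (comm_word _ _ _)))).
  by split=> [[k ->]|[k ->]]; exists k; rewrite Wneg_A.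
- move=> w /alt_swap [n0 hw].
  apply: (iff_trans _ (iff_trans (coreX hq0 hq n0 hw) _)).
    split=> [[k ->]|[k E]]; exists k.
      by rewrite Wpos_B Wneg_A mapK //; exact: negbK.
    by rewrite Wpos_B Wneg_A; apply/negb_map_eq.
  apply: (iff_trans _ (iff_sym (comm_word _ _ _))).
  exact: (@ccomm_swap F q w [:: ly]).
- move=> w /alt_AB [n0 hw].
  apply: (iff_trans _ (iff_trans (coreG hq0 hq n0 hw) (iff_sym (commZ hq0 hq w)))).
  by split=> [[k ->]|[k ->]]; exists k; rewrite Gw_A.
- move=> w /alt_swap [n0 hw].
  apply: (iff_trans _ (iff_trans (coreG hq0 hq n0 hw) _)).
    split=> [[k ->]|[k E]]; exists k.
      by rewrite Gtw_B Gw_A mapK //; exact: negbK.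
    by rewrite Gtw_B Gw_A; apply/negb_map_eq.
  apply: (iff_trans _ (iff_sym (commZ' hq0 hq w))).
  exact: (@ccomm_swap F q w [:: lx; ly]).
Qed.
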